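(* For each integer $A\ge2$ the series $u(z)=\operatorname{Re}\sum_{k=0}^\infty A^kz^{2^{A^k}}$ converges in $\mathbf D$ and there is a constant $C$ with $|u(z)|\le C\log\frac{e}{1-|z|}$ for all $z\in\mathbf D$.
   Context: $\mathbf D$ is the open unit disc. *)

(* Defs.v *)
From Stdlib Require Import Reals.
From Coquelicot Require Import Coquelicot.
Open Scope R_scope.

Definition lac_term (A : nat) (z : C) (k : nat) : C :=
  Cmult (RtoC (INR (A ^ k))) (pow_n z (2 ^ (A ^ k))).

(* Main.v *)
Require Import Defs.
From Stdlib Require Import Reals.
From Coquelicot Require Import Coquelicot.
From Stdlib Require Import Lra Lia Psatz.
Open Scope R_scope.

Lemma pow01 (r : R) n : 0 <= r <= 1 -> 0 <= r ^ n <= 1.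
Proof.
  intros H; induction n as [|n IH]; simpl; [lra|].
  split; [apply Rmult_le_pos; lra|].
  assert (r * r ^ n <= 1 * 1) by (apply Rmult_le_compat; lra). lra.
Qed.

Lemma pow_anti (r : R) m n : 0 <= r <= 1 -> (m <= n)%nat -> r ^ n <= r ^ m.
Proof.
  intros H Hmn. replace n with (m + (n - m))%nat by lia.
  rewrite pow_add. destruct (pow01 r m H). destruct (pow01 r (n - m) H).
  assert (r ^ m * r ^ (n - m) <= r ^ m * 1) by (apply Rmult_le_compat_l; lra). lra.
Qed.

Definition xx (r : R) (j : nat) : R := r ^ (2 ^ j).
Definition FF (r : R) (n : nat) : R := sum_f_R0 (xx r) n.
Definition bb (A : nat) (r : R) (k : nat) : R := INR (A ^ k) * r ^ (2 ^ (A ^ k)).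

Lemma xx01 r j : 0 <= r <= 1 -> 0 <= xx r j <= 1.
Proof. intros; unfold xx; apply pow01; auto. Qed.

Lemma xx_anti r j k : 0 <= r <= 1 -> (j <= k)%nat -> xx r k <= xx r j.
Proof.
  intros H Hjk; unfold xx; apply pow_anti; auto.
  apply Nat.pow_le_mono_r; lia.
Qed.

Lemma xxS r j : xx r (S j) = xx r j * xx r j.
Proof.
  unfold xx. rewrite Nat.pow_succ_r', Nat.mul_comm, pow_mult. ring.
Qed.

Lemma block r m d : 0 <= r <= 1 ->
  FF r m + INR d * xx r (m + d) <= FF r (m + d).
Proof.
  intros H; induction d as [|d IH].
  - rewrite Nat.add_0_r. simpl. lra.
  - rewrite Nat.add_succ_r. unfold FF in *. simpl sum_f_R0.
    rewrite S_INR.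
    assert (xx r (S (m + d)) <= xx r (m + d)) by (apply xx_anti; auto; lia).
    pose proof (xx01 r (S (m + d)) H).
    assert (INR d * xx r (S (m + d)) <= INR d * xx r (m + d)).
    { apply Rmult_le_compat_l; auto. apply pos_INR. }
    lra.
Qed.

Lemma Gbound A r K : (2 <= A)%nat -> 0 <= r <= 1 ->
  sum_f_R0 (bb A r) K <= 2 * FF r (A ^ K).
Proof.
  intros HA H; induction K as [|K IH].
  - simpl. unfold bb, FF, xx. simpl. pose proof (pow01 r 1 H). simpl in *. nra.
  - simpl sum_f_R0.
    pose proof (block r (A ^ K) (A ^ S K - A ^ K) H) as B.
    replace (A ^ K + (A ^ S K - A ^ K))%nat with (A ^ S K)%nat in B.
    2:{ simpl. nia. }
    assert (Hn : (A ^ S K <= 2 * (A ^ S K - A ^ K))%nat) by (simpl; nia).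
    apply le_INR in Hn. rewrite mult_INR in Hn. simpl (INR 2) in Hn.
    pose proof (xx01 r (A ^ S K) H).
    unfold bb at 2. fold (xx r (A ^ S K)).
    assert (INR (A ^ S K) * xx r (A ^ S K) <=
            (1 + 1) * INR (A ^ S K - A ^ K) * xx r (A ^ S K)).
    { apply Rmult_le_compat_r; lra. }
    lra.
Qed.

Lemma exp_half y : 0 <= y <= 1 -> exp (y / 2) <= 1 + y.
Proof.
  intros H.
  pose proof (exp_ineq1_le (- (y / 2))).
  assert (E : exp (y / 2) * exp (- (y / 2)) = 1).
  { rewrite <- exp_plus. replace (y / 2 + - (y / 2)) with 0 by ring. apply exp_0. }
  pose proof (exp_pos (y / 2)).
  assert (exp (y / 2) * (1 + - (y / 2)) <= 1).
  { rewrite <- E. apply Rmult_le_compat_l; lra. }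
  nra.
Qed.

Lemma prodb r J : 0 <= r < 1 -> exp (FF r J / 2) * (1 - r) <= 1 - xx r (S J).
Proof.
  intros H. assert (H' : 0 <= r <= 1) by lra.
  induction J as [|J IH].
  - unfold FF. simpl sum_f_R0. rewrite xxS.
    unfold xx. simpl. replace (r * 1) with r by ring.
    pose proof (exp_half r H'). nra.
  - unfold FF in *. simpl sum_f_R0.
    replace ((sum_f_R0 (xx r) J + xx r (S J)) / 2) with
      (sum_f_R0 (xx r) J / 2 + xx r (S J) / 2) by field.
    rewrite exp_plus. rewrite (xxS r (S J)).
    pose proof (xx01 r (S J) H').
    pose proof (exp_half (xx r (S J)) ltac:(lra)).
    pose proof (exp_pos (xx r (S J) / 2)).
    pose proof (exp_pos (sum_f_R0 (xx r) J / 2)).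
    nra.
Qed.

Lemma FFbound r J : 0 <= r < 1 -> FF r J <= 2 * ln (1 / (1 - r)).
Proof.
  intros H. pose proof (prodb r J H).
  pose proof (xx01 r (S J) ltac:(lra)).
  assert (exp (FF r J / 2) <= 1 / (1 - r)).
  { apply (Rmult_le_reg_r (1 - r)); [lra|]. unfold Rdiv. rewrite Rmult_assoc, Rinv_l; lra. }
  apply ln_le in H2; [|apply exp_pos]. rewrite ln_exp in H2. lra.
Qed.

Lemma psum_bound A r K : (2 <= A)%nat -> 0 <= r < 1 ->
  sum_f_R0 (bb A r) K <= 4 * ln (exp 1 / (1 - r)).
Proof.
  intros HA H. pose proof (Gbound A r K HA ltac:(lra)).
  pose proof (FFbound r (A ^ K) H).
  assert (ln (1 / (1 - r)) <= ln (exp 1 / (1 - r))).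
  { apply ln_le. apply Rdiv_lt_0_compat; lra.
    pose proof (exp_ineq1_le 1). apply Rmult_le_compat_r.
    left; apply Rinv_0_lt_compat; lra. lra. }
  lra.
Qed.

Lemma Cmod_pow_n (z : C) n : Cmod (pow_n z n) = Cmod z ^ n.
Proof.
  induction n as [|n IH]; simpl.
  - apply Cmod_1.
  - change (mult z (pow_n z n)) with (Cmult z (pow_n z n)).
    rewrite Cmod_mult, IH. reflexivity.
Qed.

Lemma norm_term A z k : norm (lac_term A z k) = bb A (Cmod z) k.
Proof.
  change (Cmod (lac_term A z k) = bb A (Cmod z) k). unfold lac_term, bb.
  rewrite Cmod_mult, Cmod_R, Cmod_pow_n, Rabs_pos_eq; [reflexivity| apply pos_INR].
Qed.

Lemma bb_pos A r k : 0 <= r -> 0 <= bb A r k.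
Proof.
  intros; unfold bb. apply Rmult_le_pos; [apply pos_INR| apply pow_le; auto].
Qed.

Theorem lemma9 (A : nat) (hA : (2 <= A)%nat) :
  (forall z : C, Cmod z < 1 -> ex_series (lac_term A z)) /\
  exists Cst : R, forall z : C, Cmod z < 1 ->
    forall s : C, is_series (lac_term A z) s ->
      Rabs (Re s) <= Cst * ln (exp 1 / (1 - Cmod z)).
Proof.
  split.
  - intros z Hz. pose proof (Cmod_ge_0 z) as H0.
    apply (@ex_series_le C_AbsRing C_CompleteNormedModule _ (bb A (Cmod z))).
    { intros n. rewrite norm_term. lra. }
    destruct (ex_finite_lim_seq_incr (sum_n (bb A (Cmod z)))
                (4 * ln (exp 1 / (1 - Cmod z)))) as [l Hl].
    + intros n. rewrite sum_Sn. change (plus ?a ?b) with (a + b).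
      pose proof (bb_pos A (Cmod z) (S n) H0). lra.
    + intros n. rewrite sum_n_Reals. apply psum_bound; auto; lra.
    + exists l. exact Hl.
  - exists 4. intros z Hz s Hs. pose proof (Cmod_ge_0 z) as H0.
    eapply Rle_trans; [apply re_le_Cmod|]. change (@norm C_AbsRing C_NormedModule s <= 4 * ln (exp 1 / (1 - Cmod z))).
    assert (L : filterlim (fun n => norm (sum_n (lac_term A z) n)) eventually
                  (locally (norm s))).
    { eapply filterlim_comp; [exact Hs| apply filterlim_norm]. }
    pose proof (is_lim_seq_le (fun n => norm (sum_n (lac_term A z) n))
                  (fun _ => 4 * ln (exp 1 / (1 - Cmod z))) (norm s)
                  (4 * ln (exp 1 / (1 - Cmod z)))) as HL.
    simpl in HL. apply HL; [| exact L | apply is_lim_seq_const].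
    intros n. eapply Rle_trans; [exact (@norm_sum_n_m C_AbsRing C_NormedModule (lac_term A z) 0 n)|].
    rewrite (sum_n_m_ext _ (bb A (Cmod z))); [| intros; apply norm_term].
    change (sum_n_m (bb A (Cmod z)) 0 n) with (sum_n (bb A (Cmod z)) n).
    rewrite sum_n_Reals. apply psum_bound; auto; lra.
Qed.
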